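(* Let $F$ be a non-archimedean local field over a dyadic place $\mathfrak{p}$, with valuation ring $\mathfrak{o}$, and let $H\cong End(V)$ be a split quaternion algebra over $F$ ($V$ a $2$-dimensional $F$-vector space) with an orthogonal involution $\ddagger$. Let $\lambda\in disc(\ddagger)\cap\mathfrak{o}$ with $\lambda\mathfrak{o}=\iota(disc(\ddagger))$, and suppose $\mathfrak{d}(-\lambda)\neq\mathfrak{p}$. Let $\mathcal{O}$ be a maximal $\ddagger$-order. Then there exist a fractional ideal $\mathfrak{a}$ of $F$ and an $\mathfrak{a}$-modular lattice $\Lambda\subset V$ such that $$\mathcal{O}=End(\Lambda)\cap End(\Lambda^\sharp).$$ Additionally, $disc(\mathcal{O})=disc(H)\cap\iota(disc(\ddagger))=\mathfrak{o}$.
   Context: Orthogonal involution: $F$-linear anti-automorphism of order $2$ with $3$-dimensional $+1$-eigenspace. Orders are $\mathfrak{o}$-lattice subrings with $1$ spanning $H$; a $\ddagger$-order satisfies $\mathcal{O}^\ddagger=\mathcal{O}$; a maximal $\ddagger$-order is not properly contained in another $\ddagger$-order. $b_\ddagger$ is a nondegenerate symmetric bilinear form on $V$ (fixed up to scaling) with $b_\ddagger(v,\sigma w)=b_\ddagger(\sigma^\ddagger v,w)$. Lattices: finitely generated $\mathfrak{o}$-submodules spanning $V$; $\Lambda^\sharp=\{v:b_\ddagger(v,\Lambda)\subset\mathfrak{o}\}$; $End(\Lambda)=\{\sigma:\sigma\Lambda\subset\Lambda\}$. For a fractional ideal $\mathfrak{a}$, $\Lambda$ is $\mathfrak{a}$-modular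 if $\Lambda=\mathfrak{a}\Lambda^\sharp$. $disc(\mathcal{O})$ = reduced discriminant, $disc(H)=\mathfrak{o}$ (split). $disc(\ddagger)=nrd(h)(F^\times)^2$ for nonzero $h$ with $h^\ddagger=-h$; $\iota([\mu])$ = ideal of $\mathfrak{o}$ generated by $[\mu]\cap\mathfrak{o}$. Quadratic defect: $\mathfrak{d}(\alpha)=\bigcap_{\xi\in F}(\alpha-\xi^2)\mathfrak{o}$. *)

(* Defs.v *)
From HB Require Import structures.
From mathcomp Require Import all_boot all_order all_algebra.
Set Implicit Arguments. Unset Strict Implicit. Unset Printing Implicit Defensive.
Import Order.TTheory GRing.Theory Num.Theory.
Local Open Scope ring_scope.

Section Local.
Variable F : fieldType.
(* v is a (normalized) discrete valuation on F^x; its value at 0 is irrelevant. *)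
Variable v : F -> int.

Definition is_dvaluation : Prop :=
  [/\ forall x y, x != 0 -> y != 0 -> v (x * y) = v x + v y,
      forall x y, x != 0 -> y != 0 -> x + y != 0 -> Num.min (v x) (v y) <= v (x + y)
    & exists pi : F, pi != 0 /\ v pi = 1].

Definition inO (x : F) : Prop := x = 0 \/ 0 <= v x.
Definition inP (x : F) : Prop := x = 0 \/ 1 <= v x.

Definition vclose (x y : F) (n : int) : Prop := x = y \/ n <= v (x - y).

Definition vcauchy (u : nat -> F) : Prop :=
  forall n : int, exists N, forall i j, (N <= i)%N -> (N <= j)%N -> vclose (u i) (u j) n.
Definition vconverges (u : nat -> F) (l : F) : Prop :=
  forall n : int, exists N, forall i, (N <= i)%N -> vclose (u i) l n.

(* non-archimedean local field: complete discretely valued field with finite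
   residue field *)
Definition is_nonarch_local_field : Prop :=
  [/\ is_dvaluation,
      forall u, vcauchy u -> exists l, vconverges u l
    & exists s : seq F, (forall y, y \in s -> inO y) /\
        forall x, inO x -> exists2 y, y \in s & inP (x - y)].

(* the place p is dyadic: p | 2 (and char F = 0, i.e. 2 <> 0) *)
Definition dyadic : Prop := (2 : F) != 0 /\ inP 2.

Definition is_lattice (m n : nat) (L : 'M[F]_(m, n) -> Prop) : Prop :=
  exists (k : nat) (g : 'I_k -> 'M[F]_(m, n)),
    (forall x, L x <-> exists c : 'I_k -> F, (forall i, inO (c i)) /\
                                              x = \sum_(i < k) c i *: g i)
    /\ (forall x, exists c : 'I_k -> F, x = \sum_(i < k) c i *: g i).

(* H = End(V) with V = F^2 (column vectors), H = 'M[F]_2 *)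
Definition is_order (O : 'M[F]_2 -> Prop) : Prop :=
  [/\ is_lattice O, O 1 & forall x y, O x -> O y -> O (x * y)].

Definition is_orth_involution (inv : 'M[F]_2 -> 'M[F]_2) : Prop :=
  [/\ forall (a : F) x y, inv (a *: x + y) = a *: inv x + inv y,
      forall x y, inv (x * y) = inv y * inv x,
      forall x, inv (inv x) = x
    & \rank (eigenspace (lin_mx inv) 1) = 3%N].

Definition is_inv_order (inv : 'M[F]_2 -> 'M[F]_2) (O : 'M[F]_2 -> Prop) : Prop :=
  is_order O /\ (forall y, O y <-> exists x, O x /\ y = inv x).

Definition is_max_inv_order (inv : 'M[F]_2 -> 'M[F]_2) (O : 'M[F]_2 -> Prop) : Prop :=
  is_inv_order inv O /\
  forall O', is_inv_order inv O' -> (forall x, O x -> O' x) -> forall x, O' x -> O x.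

Definition bform (B : 'M[F]_2) (x y : 'cV[F]_2) : F := (x^T *m B *m y) 0 0.

Definition is_adjoint_form (inv : 'M[F]_2 -> 'M[F]_2) (B : 'M[F]_2) : Prop :=
  [/\ B^T = B, B \in unitmx &
      forall (s : 'M[F]_2) x y, bform B x (s *m y) = bform B (inv s *m x) y].

Definition dual_lattice (B : 'M[F]_2) (L : 'cV[F]_2 -> Prop) (x : 'cV[F]_2) : Prop :=
  forall y, L y -> inO (bform B x y).

Definition EndL (L : 'cV[F]_2 -> Prop) (s : 'M[F]_2) : Prop :=
  forall x, L x -> L (s *m x).

(* Lambda is a-modular for the fractional ideal a = alpha o:
   Lambda = a Lambda^# = alpha Lambda^# *)
Definition modular (B : 'M[F]_2) (alpha : F) (L : 'cV[F]_2 -> Prop) : Prop :=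
  forall x, L x <-> exists y, dual_lattice B L y /\ x = alpha *: y.

(* disc(ddagger) = nrd(h) (F^x)^2, h nonzero skew *)
Definition in_disc (inv : 'M[F]_2 -> 'M[F]_2) (y : F) : Prop :=
  exists h : 'M[F]_2, [/\ h != 0, inv h = - h &
    exists mu : F, mu != 0 /\ y = \det h * mu ^+ 2].

Definition gen_ideal (S : F -> Prop) (x : F) : Prop :=
  exists (k : nat) (c s : 'I_k -> F),
    [/\ forall i, inO (c i), forall i, S (s i) & x = \sum_(i < k) c i * s i].

Definition iota_disc (inv : 'M[F]_2 -> 'M[F]_2) : F -> Prop :=
  gen_ideal (fun y => in_disc inv y /\ inO y).

Definition ideal_mul (a b : F -> Prop) : F -> Prop :=
  gen_ideal (fun y => exists s t, [/\ a s, b t & y = s * t]).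

Definition qdefect (alpha : F) (x : F) : Prop :=
  forall xi : F, exists c, inO c /\ x = (alpha - xi ^+ 2) * c.

Definition disc_order (O : 'M[F]_2 -> Prop) : F -> Prop :=
  gen_ideal (fun y => exists a : 'I_4 -> 'M[F]_2,
     (forall i, O (a i)) /\ y = \det (\matrix_(i, j) \tr (a i * a j))).

Definition is_reduced_disc (O : 'M[F]_2 -> Prop) (d : F -> Prop) : Prop :=
  forall x, disc_order O x <-> ideal_mul d d x.

End Local.

(* Main.v *)
From HB Require Import structures.
From mathcomp Require Import all_boot all_order all_algebra.
From mathcomp Require Import ring lra zify.
From mathcomp Require Import fingroup perm.
Require Import Defs.
Set Implicit Arguments. Unset Strict Implicit. Unset Printing Implicit Defensive.
Import Order.TTheory GRing.Theory Num.Theory.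
Local Open Scope ring_scope.

Section M2.
Variable F : fieldType.

Definition mk2 (a b c d : F) : 'M[F]_2 :=
  \matrix_(i < 2, j < 2) if (i : nat) == 0%N then (if (j : nat) == 0%N then a else b)
                         else (if (j : nat) == 0%N then c else d).
Definition vc2 (a b : F) : 'cV[F]_2 := \col_(i < 2) if (i : nat) == 0%N then a else b.

Lemma ord2P (i : 'I_2) : i = ord0 \/ i = ord_max.
Proof. case: i => [[|[|//]]] H; [left|right]; exact: val_inj. Qed.

Lemma sum2 (f : 'I_2 -> F) : \sum_i f i = f ord0 + f ord_max.
Proof. rewrite big_ord_recr big_ord1 /=. congr (_ + _). by congr f; apply: val_inj. Qed.

Lemma sum2g (V : nmodType) (f : 'I_2 -> V) : \sum_i f i = f ord0 + f ord_max.
Proof. rewrite big_ord_recr big_ord1 /=. congr (_ + _). by congr f; apply: val_inj. Qed.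

Lemma sum1 (f : 'I_1 -> F) : \sum_i f i = f ord0.
Proof. by rewrite big_ord1. Qed.


Lemma mk2E (M : 'M[F]_2) : M = mk2 (M ord0 ord0) (M ord0 ord_max) (M ord_max ord0) (M ord_max ord_max).
Proof. apply/matrixP => i j; rewrite !mxE; case: (ord2P i) => ->; case: (ord2P j) => -> //. Qed.

Lemma vc2E (x : 'cV[F]_2) : x = vc2 (x ord0 ord0) (x ord_max ord0).
Proof. apply/matrixP => i j; rewrite !mxE; rewrite (ord1 j); case: (ord2P i) => -> //. Qed.

Lemma mul_mk2 a b c d a' b' c' d' :
  mk2 a b c d *m mk2 a' b' c' d' = mk2 (a * a' + b * c') (a * b' + b * d') (c * a' + d * c') (c * b' + d * d').
Proof. apply/matrixP => i j; rewrite !mxE sum2 !mxE; case: (ord2P i) => ->; case: (ord2P j) => -> //. Qed.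

Lemma mul_mk2v a b c d x y :
  mk2 a b c d *m vc2 x y = vc2 (a * x + b * y) (c * x + d * y).
Proof. apply/matrixP => i j; rewrite !mxE sum2 !mxE; case: (ord2P i) => -> //. Qed.

Lemma tr_mk2 a b c d : (mk2 a b c d)^T = mk2 a c b d.
Proof. apply/matrixP => i j; rewrite !mxE; case: (ord2P i) => ->; case: (ord2P j) => -> //. Qed.

Lemma det_mk2 a b c d : \det (mk2 a b c d) = a * d - b * c.
Proof.
rewrite (expand_det_row _ ord0) sum2 /cofactor !mxE /=.
rewrite !(@det_mx11 F) !mxE /= add0n expr0 expr1. ring.
Qed.


Lemma scale_mk2 k a b c d : k *: mk2 a b c d = mk2 (k * a) (k * b) (k * c) (k * d).
Proof. apply/matrixP => i j; rewrite !mxE; case: (ord2P i) => ->; case: (ord2P j) => -> //. Qed.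

Lemma mk2_1 : (1%:M : 'M[F]_2) = mk2 1 0 0 1.
Proof. apply/matrixP => i j; rewrite !mxE; case: (ord2P i) => ->; case: (ord2P j) => -> //. Qed.

Lemma mk2_inj a b c d a' b' c' d' : mk2 a b c d = mk2 a' b' c' d' -> [/\ a = a', b = b', c = c' & d = d'].
Proof.
move=> e; split; [move: (congr1 (fun M : 'M[F]_2 => M ord0 ord0) e) | move: (congr1 (fun M : 'M[F]_2 => M ord0 ord_max) e)
 | move: (congr1 (fun M : 'M[F]_2 => M ord_max ord0) e) | move: (congr1 (fun M : 'M[F]_2 => M ord_max ord_max) e)]; by rewrite !mxE.
Qed.


Lemma add_mk2 a b c d a' b' c' d' : mk2 a b c d + mk2 a' b' c' d' = mk2 (a + a') (b + b') (c + c') (d + d').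
Proof. apply/matrixP => i j; rewrite !mxE; case: (ord2P i) => ->; case: (ord2P j) => -> //. Qed.

Definition E4 (k : 'I_4) : 'M[F]_2 := match nat_of_ord k with
  | 0 => mk2 1 0 0 0 | 1 => mk2 0 1 0 0 | 2 => mk2 0 0 1 0 | _ => mk2 0 0 0 1 end.

Definition q0 : 'I_4 := @Ordinal 4 0 isT.
Definition q1 : 'I_4 := @Ordinal 4 1 isT.
Definition q2 : 'I_4 := @Ordinal 4 2 isT.
Definition q3 : 'I_4 := @Ordinal 4 3 isT.

Lemma sum4 (V : zmodType) (f : 'I_4 -> V) : \sum_k f k = f q0 + f q1 + f q2 + f q3.
Proof. rewrite big_ord_recr big_ord_recr big_ord_recr big_ord1 /=; congr (_ + _ + _ + _); congr f; exact: val_inj. Qed.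

Lemma Esum (cc : 'I_4 -> F) : \sum_k cc k *: E4 k = mk2 (cc q0) (cc q1) (cc q2) (cc q3).
Proof. rewrite sum4 /E4 /= !scale_mk2 !add_mk2; congr mk2; ring. Qed.

Definition coef4 (Y : 'M[F]_2) (k : 'I_4) : F := match nat_of_ord k with
  | 0 => Y ord0 ord0 | 1 => Y ord0 ord_max | 2 => Y ord_max ord0 | _ => Y ord_max ord_max end.

Lemma coef4E Y : mk2 (coef4 Y q0) (coef4 Y q1) (coef4 Y q2) (coef4 Y q3) = Y.
Proof. by rewrite /coef4 /= -mk2E. Qed.


Lemma trace_mk2 a b c d : \tr (mk2 a b c d) = a + d.
Proof. by rewrite /mxtrace sum2 !mxE. Qed.

Lemma ord4P (k : 'I_4) : [\/ k = q0, k = q1, k = q2 | k = q3].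
Proof.
case: k => [[|[|[|[|//]]]] H]; [constructor 1|constructor 2|constructor 3|constructor 4]; exact: val_inj.
Qed.

Lemma trE_perm : \matrix_(j, l) \tr (E4 j *m E4 l) = perm_mx (perm.tperm q1 q2) :> 'M[F]_4.
Proof.
have t0 : perm.tperm q1 q2 q0 = q0 by rewrite perm.tpermD.
have t1 : perm.tperm q1 q2 q1 = q2 by rewrite perm.tpermL.
have t2 : perm.tperm q1 q2 q2 = q1 by rewrite perm.tpermR.
have t3 : perm.tperm q1 q2 q3 = q3 by rewrite perm.tpermD.
apply/matrixP => j l; rewrite !mxE.
by case: (ord4P j) => ->; case: (ord4P l) => ->; rewrite ?t0 ?t1 ?t2 ?t3 /E4 /= mul_mk2 trace_mk2; ring.
Qed.

Lemma det_trE : \det (\matrix_(j, l) \tr (E4 j *m E4 l) : 'M[F]_4) = -1.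
Proof. by rewrite trE_perm det_perm perm.odd_tperm /= expr1. Qed.

End M2.

Ltac fld := field; try (repeat (apply/andP; split); by []).

Ltac vlia v := intros; repeat match goal with H : context[v _] |- _ => revert H end; repeat (match goal with |- context [v ?x] => let a := fresh "va" in set a := v x; clearbody a end); intros; lia.

Section Val.
Variable F : fieldType.
Variable v : F -> int.
Hypothesis hv : is_dvaluation v.

Lemma vM x y : x != 0 -> y != 0 -> v (x * y) = v x + v y.
Proof. by case: hv => h _ _; apply: h. Qed.

Lemma vD x y : x != 0 -> y != 0 -> x + y != 0 -> v x <= v (x + y) \/ v y <= v (x + y).
Proof. case: hv => _ h _ hx hy hxy; move: (h _ _ hx hy hxy). rewrite ge_min => /orP. tauto. Qed.

Lemma v1 : v 1 = 0.
Proof. have := vM (oner_neq0 F) (oner_neq0 F). rewrite mulr1. vlia v. Qed.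

Lemma vN1 : v (-1) = 0.
Proof. have h : (-1 : F) != 0 by rewrite oppr_eq0 oner_neq0.
have := vM h h. rewrite mulrNN mulr1 v1. vlia v. Qed.

Lemma vN x : v (- x) = v x.
Proof.
have [->|hx] := eqVneq x 0; first by rewrite oppr0.
have h : (-1 : F) != 0 by rewrite oppr_eq0 oner_neq0.
by rewrite -mulN1r vM // vN1 add0r.
Qed.

Lemma vV x : x != 0 -> v (x^-1) = - v x.
Proof. move=> hx. have hi : x^-1 != 0 by rewrite invr_eq0.
have := vM hx hi. rewrite mulfV // v1. vlia v. Qed.


Notation O := (inO v).
Notation Pp := (inP v).

Lemma inO0 : O 0. Proof. by left. Qed.
Lemma inO1 : O 1. Proof. by right; rewrite v1. Qed.
Lemma inON x : O x -> O (- x).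
Proof. case=> [->|h]; [left; exact: oppr0 | right; by rewrite vN]. Qed.
Lemma inOM x y : O x -> O y -> O (x * y).
Proof.
case=> [->|hx]; first by left; rewrite mul0r.
case=> [->|hy]; first by left; rewrite mulr0.
have [->|x0] := eqVneq x 0; first by left; rewrite mul0r.
have [->|y0] := eqVneq y 0; first by left; rewrite mulr0.
right; rewrite vM //; vlia v.
Qed.
Lemma inOD x y : O x -> O y -> O (x + y).
Proof.
case=> [->|hx]; first by rewrite add0r.
case=> [->|hy]; first by rewrite addr0; right.
have [->|x0] := eqVneq x 0; first by rewrite add0r; right.
have [->|y0] := eqVneq y 0; first by rewrite addr0; right.
have [->|s0] := eqVneq (x + y) 0; first by left.
right; case: (vD x0 y0 s0); vlia v.
Qed.
Lemma inOB x y : O x -> O y -> O (x - y).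
Proof. by move=> hx hy; apply: inOD => //; apply: inON. Qed.
Lemma inP0 : Pp 0. Proof. by left. Qed.
Lemma inPO x : Pp x -> O x.
Proof. case=> [->|h]; [by left | right; vlia v]. Qed.
Lemma inPM x y : Pp x -> O y -> Pp (x * y).
Proof.
case=> [->|hx]; first by left; rewrite mul0r.
case=> [->|hy]; first by left; rewrite mulr0.
have [->|x0] := eqVneq x 0; first by left; rewrite mul0r.
have [->|y0] := eqVneq y 0; first by left; rewrite mulr0.
right; rewrite vM //; vlia v.
Qed.

Lemma inO_v x : x != 0 -> O x -> 0 <= v x.
Proof. by move=> x0 [h|//]; rewrite h eqxx in x0. Qed.
Lemma inP_v x : x != 0 -> Pp x -> 1 <= v x.
Proof. by move=> x0 [h|//]; rewrite h eqxx in x0. Qed.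

Lemma dv_total p q : (exists r, O r /\ q = p * r) \/ (exists r, Pp r /\ p = q * r).
Proof.
have [->|p0] := eqVneq p 0; first by right; exists 0; split; [left|rewrite mulr0].
have [->|q0] := eqVneq q 0; first by left; exists 0; split; [left|rewrite mulr0].
have pi0 : p^-1 != 0 by rewrite invr_eq0.
have qi0 : q^-1 != 0 by rewrite invr_eq0.
case: (lerP (v p) (v q)) => h.
- left; exists (q / p); split; last by field.
  by right; rewrite vM // vV //; vlia v.
- right; exists (p / q); split; last by field.
  by right; rewrite vM // vV //; vlia v.
Qed.

Lemma unit_lem z : Pp z -> z - 1 != 0 /\ O ((z - 1)^-1).
Proof.
move=> hz.
have z10 : z - 1 != 0.
  apply/eqP => e. have z1 : z = 1 by rewrite -(subrK 1 z) e add0r.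
  case: hz; rewrite z1; [by move/eqP; rewrite oner_eq0 | rewrite v1 //].
split => //.
have [->|z0] := eqVneq z 0.
  right; rewrite sub0r vV ?oppr_eq0 ?oner_eq0 // vN v1 //.
right; rewrite vV //.
have hz1 := inP_v z0 hz.
have n0 : - z != 0 by rewrite oppr_eq0.
have s0 : (z - 1) + - z != 0 by rewrite addrAC subrr sub0r oppr_eq0 oner_eq0.
have := vD z10 n0 s0; rewrite addrAC subrr sub0r vN1 vN. vlia v.
Qed.

Lemma sq_lem t : O (t * t) -> O t.
Proof.
have [->|t0] := eqVneq t 0; first by left.
move=> h; right; have := inO_v (mulf_neq0 t0 t0) h; rewrite vM //; vlia v.
Qed.

Lemma unit_inv x : x != 0 -> v x = 0 -> O (x^-1).
Proof. by move=> x0 h; right; rewrite vV // h. Qed.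


Definition Tspan a b d (z0 z1 : F) := exists y1 y2, O y1 /\ O y2 /\ z0 = y1 * a /\ z1 = y1 * b + y2 * d.

Lemma combine d e : exists d', forall z,
  (exists y, O y /\ z = y * d') <-> (exists y1 y2, O y1 /\ O y2 /\ z = y1 * d + y2 * e).
Proof.
case: (dv_total d e) => [[r [hr ->]]|[r [hr ->]]].
- exists d => z; split.
  + by case=> y [hy ->]; exists y, 0; split => //; split; [exact: inO0| ring].
  + case=> y1 [y2 [h1 [h2 ->]]]; exists (y1 + y2 * r); split; last by ring.
    by apply: inOD => //; apply: inOM.
- exists e => z; split.
  + by case=> y [hy ->]; exists 0, y; split; [exact: inO0|split => //; ring].
  + case=> y1 [y2 [h1 [h2 ->]]]; exists (y1 * r + y2); split; last by ring.
    by apply: inOD => //; apply: inOM => //; apply: inPO.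
Qed.

Lemma span_step a b d x0 x1 : exists a' b' d', forall z0 z1, Tspan a' b' d' z0 z1 <->
  exists y1 y2 c, [/\ O y1, O y2, O c, z0 = y1 * a + c * x0 & z1 = y1 * b + y2 * d + c * x1].
Proof.
case: (dv_total a x0) => [[r [hr ex]]|[r [hr ea]]].
- have [d' hd'] := combine d (x1 - r * b).
  exists a, b, d' => z0 z1; split.
  + case=> y1 [y [h1 [hy [-> ez1]]]].
    have [y1' [y2' [h1' [h2' e']]]] : exists y1 y2, O y1 /\ O y2 /\ y * d' = y1 * d + y2 * (x1 - r * b).
      by apply/hd'; exists y.
    exists (y1 - y2' * r), y1', y2'; split => //.
    * by apply: inOB => //; apply: inOM.
    * rewrite ex; ring.
    * rewrite ez1 e'; ring.
  + case=> y1 [y2 [c [h1 h2 hc -> ->]]].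
    have [y [hy e]] : exists y, O y /\ y2 * d + c * (x1 - r * b) = y * d'.
      by apply/hd'; exists y2, c.
    exists (y1 + c * r), y; split; first by apply: inOD => //; apply: inOM.
    split => //; split; first by rewrite ex; ring.
    by rewrite -e; ring.
- have [d' hd'] := combine d (b - r * x1).
  exists x0, x1, d' => z0 z1; split.
  + case=> y1 [y [h1 [hy [-> ez1]]]].
    have [y1' [y2' [h1' [h2' e']]]] : exists y1 y2, O y1 /\ O y2 /\ y * d' = y1 * d + y2 * (b - r * x1).
      by apply/hd'; exists y.
    exists y2', y1', (y1 - y2' * r); split => //.
    * by apply: inOB => //; apply: inOM => //; apply: inPO.
    * rewrite ea; ring.
    * rewrite ez1 e'; ring.
  + case=> y1 [y2 [c [h1 h2 hc -> ->]]].
    have [y [hy e]] : exists y, O y /\ y2 * d + y1 * (b - r * x1) = y * d'.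
      by apply/hd'; exists y2, y1.
    exists (y1 * r + c), y; split; first by apply: inOD => //; apply: inOM => //; apply: inPO.
    split => //; split; first by rewrite ea; ring.
    by rewrite -e; ring.
Qed.

Lemma span_fam n (w0 w1 : 'I_n -> F) a b d : exists a' b' d', forall z0 z1, Tspan a' b' d' z0 z1 <->
  exists y1 y2 (c : 'I_n -> F), [/\ O y1, O y2, forall i, O (c i),
     z0 = y1 * a + \sum_i c i * w0 i & z1 = y1 * b + y2 * d + \sum_i c i * w1 i].
Proof.
elim: n w0 w1 a b d => [|n IH] w0 w1 a b d.
  exists a, b, d => z0 z1; split.
  - case=> y1 [y2 [h1 [h2 [-> ->]]]]; exists y1, y2, (fun _ => 0); split => //.
    + by move=> [].
    + by rewrite big_ord0 addr0.
    + by rewrite big_ord0 addr0.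
  - case=> y1 [y2 [c [h1 h2 hc -> ->]]]; exists y1, y2; rewrite !big_ord0 !addr0; by do !split.
have [a1 [b1 [d1 hs]]] := span_step a b d (w0 ord0) (w1 ord0).
have [a' [b' [d' hI]]] := IH (fun i => w0 (lift ord0 i)) (fun i => w1 (lift ord0 i)) a1 b1 d1.
exists a', b', d' => z0 z1; split.
- move/hI => [y1 [y2 [c [h1 h2 hc -> ->]]]].
  have : Tspan a1 b1 d1 (y1 * a1) (y1 * b1 + y2 * d1) by exists y1, y2.
  move/hs => [y1' [y2' [c0 [h1' h2' hc0 e0 e1]]]].
  exists y1', y2', (fun i => if unlift ord0 i is Some j then c j else c0); split => //.
  + by move=> i; case: (unlift ord0 i).
  + rewrite big_ord_recl /= unlift_none e0.
    have -> : forall f : 'I_n -> F, \sum_(i < n) (if unlift ord0 (lift ord0 i) is Some j then c j else c0) * f i = \sum_i c i * f i.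
      by move=> f; apply: eq_bigr => i _; rewrite liftK.
    ring.
  + rewrite big_ord_recl /= unlift_none.
    have -> : forall f : 'I_n -> F, \sum_(i < n) (if unlift ord0 (lift ord0 i) is Some j then c j else c0) * f i = \sum_i c i * f i.
      by move=> f; apply: eq_bigr => i _; rewrite liftK.
    rewrite e1; ring.
- case=> y1 [y2 [c [h1 h2 hc -> ->]]].
  have : Tspan a1 b1 d1 (y1 * a + c ord0 * w0 ord0) (y1 * b + y2 * d + c ord0 * w1 ord0).
    by apply/hs; exists y1, y2, (c ord0).
  case=> y1' [y2' [h1' [h2' [e0 e1]]]].
  apply/hI; exists y1', y2', (fun i => c (lift ord0 i)); split => //.
  + by rewrite big_ord_recl addrA e0.
  + by rewrite big_ord_recl addrA e1.
Qed.

End Val.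

Section Mat.
Variable F : fieldType.
Variable v : F -> int.
Hypothesis hv : is_dvaluation v.
Notation O := (inO v).
Notation Pp := (inP v).

Definition intM m n (M : 'M[F]_(m, n)) := forall i j, O (M i j).
Definition lat (Q : 'M[F]_2) (x : 'cV[F]_2) := exists y, intM y /\ x = Q *m y.

Lemma intM_mul m n p (A : 'M[F]_(m, n)) (C : 'M[F]_(n, p)) : intM A -> intM C -> intM (A *m C).
Proof.
move=> hA hC i j; rewrite mxE; apply: (big_ind O) => //; first exact: inO0.
- by move=> x y; apply: inOD.
- by move=> k _; apply: inOM.
Qed.

Lemma intM_delta m n (i : 'I_m) (j : 'I_n) : intM (delta_mx i j : 'M[F]_(m, n)).
Proof. by move=> a b; rewrite mxE; case: (_ && _); [apply: inO1|apply: inO0]. Qed.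

Lemma intM_mk2 a b c d : intM (mk2 a b c d) <-> [/\ O a, O b, O c & O d].
Proof.
split.
- by move=> h; split; [move: (h ord0 ord0)|move: (h ord0 ord_max)|move: (h ord_max ord0)|move: (h ord_max ord_max)]; rewrite mxE.
- by case=> ha hb hc hd i j; rewrite mxE; case: (ord2P i) => ->; case: (ord2P j) => ->.
Qed.

Lemma colE' m n (M : 'M[F]_(m, n)) i j : (M *m delta_mx j (ord0 : 'I_1)) i ord0 = M i j.
Proof. by rewrite -colE mxE. Qed.

Lemma EndL_lat Q s : Q \in unitmx ->
  (EndL (lat Q) s <-> exists Y, intM Y /\ s *m Q = Q *m Y).
Proof.
move=> hQ; split.
- move=> hE; exists (invmx Q *m s *m Q); split.
  + move=> i j.
    have [y [hy ey]] : lat Q (s *m (Q *m delta_mx j (ord0 : 'I_1))).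
      by apply: hE; exists (delta_mx j (ord0 : 'I_1)); split => //; apply: intM_delta.
    have -> : (invmx Q *m s *m Q) i j = y i ord0.
      rewrite -(colE' (invmx Q *m s *m Q)) -!mulmxA ey mulmxA mulVmx // mul1mx //.
    exact: hy.
  + by rewrite !mulmxA mulmxV // mul1mx.
- case=> Y [hY eY] x [y [hy ->]]; exists (Y *m y); split; first exact: intM_mul.
  by rewrite mulmxA eY mulmxA.
Qed.


Lemma intM_tr m n (M : 'M[F]_(m, n)) : intM M -> intM M^T.
Proof. by move=> h i j; rewrite mxE. Qed.

Lemma bformE (B : 'M[F]_2) x y : bform B x y = (x^T *m B *m y) ord0 ord0.
Proof. by rewrite /bform (ord1 0). Qed.

Lemma dual_lat B Q x : B^T = B ->
  (dual_lattice v B (lat Q) x <-> intM (Q^T *m B *m x)).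
Proof.
move=> hB.
have key : (Q^T *m B *m x)^T = x^T *m B *m Q by rewrite !trmx_mul trmxK hB mulmxA.
split.
- move=> h i j; rewrite (ord1 j).
  have := h (Q *m delta_mx i (ord0 : 'I_1)).
  rewrite bformE mulmxA -key colE' mxE; apply.
  by exists (delta_mx i ord0); split => //; apply: intM_delta.
- move=> h y [z [hz ->]]; rewrite bformE mulmxA -key.
  by apply: intM_mul => //; apply: intM_tr.
Qed.

End Mat.

Section Main.
Variable F : fieldType.
Variable v : F -> int.
Hypothesis hv : is_dvaluation v.
Notation O := (inO v).
Notation Pp := (inP v).
Variable B : 'M[F]_2.
Hypothesis hBs : B^T = B.
Hypothesis hBu : B \in unitmx.
Variables lam rho : F.
Hypothesis lam0 : lam != 0.
Hypothesis lamO : O lam.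
Hypothesis lamIO : O lam^-1.
Hypothesis rho0 : rho != 0.
Hypothesis detB : \det B = rho ^+ 2 / lam.
Variable Ord : 'M[F]_2 -> Prop.

Definition Setup (P : 'M[F]_2) := P \in unitmx /\ forall s, Ord s -> exists X Z,
  [/\ intM v X, intM v Z, s *m P = P *m X & Z *m (P^T *m B) = P^T *m B *m s].

Definition Good (Q : 'M[F]_2) := [/\ Q \in unitmx,
  exists c W W', [/\ c != 0, intM v W, intM v W', W *m W' = 1%:M & Q^T *m B *m Q = c *: W]
  & forall s, Ord s -> exists Y, intM v Y /\ s *m Q = Q *m Y].

Lemma detP_neq0 (P : 'M[F]_2) : P \in unitmx -> \det P != 0.
Proof. by rewrite unitmxE unitfE. Qed.

Lemma A1 P g r q : Setup P -> P^T *m B *m P = mk2 g (g * r) (g * r) (g * q) -> g != 0 ->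
  O r -> O q -> exists Q, Good Q.
Proof.
move=> [Pu hS] hG g0 hr hq.
have dP := detP_neq0 Pu.
set t := \det P * rho / g.
have t0 : t != 0 by rewrite /t !mulf_neq0 ?invr_eq0.
have e : g * (g * q) - g * r * (g * r) = \det P ^+ 2 * (rho ^+ 2 / lam).
  by rewrite -det_mk2 -hG !det_mulmx det_tr detB; ring.
have hw : q = r * r + lam^-1 * t * t.
  have -> : lam^-1 * t * t = (g * (g * q) - g * r * (g * r)) / (g * g).
    by rewrite e /t; fld.
  by fld.
have tO : O t.
  apply: (sq_lem hv).
  have -> : t * t = lam * (q - r * r) by rewrite hw; fld.
  by apply: (inOM hv) => //; apply: (inOB hv) => //; apply: (inOM hv).
exists (P *m mk2 1 (- r / t) 0 (1 / t)); split.
- rewrite unitmx_mul Pu unitmxE det_mk2 unitfE.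
  have -> : 1 * (1 / t) - - r / t * 0 = t^-1 by fld.
  by rewrite invr_eq0.
- exists g, (mk2 1 0 0 lam^-1), (mk2 1 0 0 lam); split => //.
  + by apply/intM_mk2; split; [exact: inO1|exact: inO0|exact: inO0|].
  + by apply/intM_mk2; split; [exact: inO1|exact: inO0|exact: inO0|].
  + rewrite mul_mk2 mk2_1; congr mk2; fld.
  + have -> : forall U : 'M[F]_2, (P *m U)^T *m B *m (P *m U) = U^T *m (P^T *m B *m P) *m U.
      by move=> U; rewrite trmx_mul !mulmxA.
    rewrite hG tr_mk2 !mul_mk2 scale_mk2 hw; congr mk2; fld.
- move=> s hs.
  have [X [Z [hX hZ eX eZ]]] := hS s hs.
  have eG : Z *m mk2 g (g * r) (g * r) (g * q) = mk2 g (g * r) (g * r) (g * q) *m X.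
    by rewrite -hG mulmxA eZ -!mulmxA eX.
  move: eG hX hZ eX; rewrite (mk2E X) (mk2E Z).
  move: (X ord0 ord0) (X ord0 ord_max) (X ord_max ord0) (X ord_max ord_max) => x00 x01 x10 x11.
  move: (Z ord0 ord0) (Z ord0 ord_max) (Z ord_max ord0) (Z ord_max ord_max) => z00 z01 z10 z11.
  rewrite !mul_mk2 => /mk2_inj [e1 e2 _ _] /intM_mk2 [h00 h01 h10 h11] /intM_mk2 [k00 k01 k10 k11] eX.
  exists (mk2 (x00 + r * x10) (z01 / lam * t) (t * x10) (x11 - r * x10)); split.
  + apply/intM_mk2; split.
    * by apply: (inOD hv) => //; apply: (inOM hv).
    * by apply: (inOM hv) => //; apply: (inOM hv).
    * by apply: (inOM hv).
    * by apply: (inOB hv) => //; apply: (inOM hv).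
  + rewrite mulmxA eX -!mulmxA; congr (_ *m _).
    have hx00 : x00 = (g * x00 + g * r * x10) / g - r * x10 by fld.
    have hx01 : x01 = (g * x01 + g * r * x11) / g - r * x11 by fld.
    rewrite -e1 in hx00; rewrite -e2 in hx01.
    rewrite !mul_mk2 hx00 hx01; congr mk2; rewrite ?hw; fld.
Qed.


Lemma A3 P t r1 r2 : Setup P -> P^T *m B *m P = mk2 (t * r1) t t (t * r2) -> t != 0 ->
  Pp r1 -> Pp r2 -> exists Q, Good Q.
Proof.
move=> [Pu hS] hG t0 h1 h2.
have [u0 uO] := unit_lem hv (inPM hv h1 (inPO h2)).
set e := (r1 * r2 - 1)^-1 in uO.
exists P; split => //.
- exists t, (mk2 r1 1 1 r2), (mk2 (e * r2) (- e) (- e) (e * r1)); split => //.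
  + by apply/intM_mk2; split; [exact: inPO h1|exact: inO1|exact: inO1|exact: inPO h2].
  + apply/intM_mk2; split; [ | apply: (inON hv) | apply: (inON hv) | ] => //; apply: (inOM hv) => //;
    exact: inPO.
  + rewrite mul_mk2 mk2_1 /e; congr mk2; fld.
  + by rewrite hG scale_mk2 !mulr1.
- move=> s hs; have [X [Z [hX _ eX _]]] := hS s hs; by exists X.
Qed.

Lemma swap_setup P : Setup P -> Setup (P *m mk2 0 1 1 0).
Proof.
have SS : mk2 0 1 1 0 *m mk2 0 1 1 0 = 1%:M :> 'M[F]_2.
  by rewrite mul_mk2 mk2_1; congr mk2; ring.
move=> [Pu hS]; split.
- rewrite unitmx_mul Pu unitmxE det_mk2 unitfE.
  have -> : 0 * 0 - 1 * 1 = - 1 :> F by ring.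
  by rewrite oppr_eq0 oner_eq0.
- move=> s hs; have [X [Z [hX hZ eX eZ]]] := hS s hs.
  have iS : intM v (mk2 0 1 1 0 : 'M[F]_2) by apply/intM_mk2; split; [exact: inO0|exact: inO1|exact: inO1|exact: inO0].
  exists (mk2 0 1 1 0 *m X *m mk2 0 1 1 0), (mk2 0 1 1 0 *m Z *m mk2 0 1 1 0); split.
  + by apply: intM_mul => //; apply: intM_mul.
  + by apply: intM_mul => //; apply: intM_mul.
  + by rewrite mulmxA eX -!mulmxA (mulmxA (mk2 0 1 1 0) (mk2 0 1 1 0)) SS mul1mx.
  + by rewrite trmx_mul tr_mk2 -!mulmxA (mulmxA (mk2 0 1 1 0) (mk2 0 1 1 0)) SS mul1mx eZ -!mulmxA.
Qed.

Lemma setup_good P : Setup P -> exists Q, Good Q.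
Proof.
move=> hP; have Pu := hP.1.
have Gu : P^T *m B *m P \in unitmx by rewrite !unitmx_mul unitmx_tr Pu hBu.
have Gs : (P^T *m B *m P)^T = P^T *m B *m P by rewrite !trmx_mul trmxK hBs mulmxA.
set G := P^T *m B *m P in Gu Gs.
have hG : G = mk2 (G ord0 ord0) (G ord0 ord_max) (G ord0 ord_max) (G ord_max ord_max).
  move: Gs; rewrite {1 2}(mk2E G) tr_mk2 => /mk2_inj [_ eb _ _]; by rewrite {1}(mk2E G) eb.
have hGS : (P *m mk2 0 1 1 0)^T *m B *m (P *m mk2 0 1 1 0) =
   mk2 (G ord_max ord_max) (G ord0 ord_max) (G ord0 ord_max) (G ord0 ord0).
  rewrite trmx_mul tr_mk2 -!mulmxA (mulmxA B) (mulmxA P^T) (mulmxA P^T B P) -/G {1}hG !mul_mk2; congr mk2; ring.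
move: hG hGS; move: (G ord0 ord0) (G ord0 ord_max) (G ord_max ord_max) => a b d hG hGS.
have dG := detP_neq0 Gu; rewrite hG det_mk2 in dG.
have hPS := swap_setup hP.
case: (dv_total hv a b) => [[r [hr eb]]|[r1 [hr1 ea]]].
- case: (dv_total hv a d) => [[q [hq ed]]|[r' [hr' ea]]].
  + apply: (A1 hP (g := a) (r := r) (q := q)) => //; first by rewrite -/G hG eb ed.
    by apply/eqP => a0; move/eqP: dG; apply; rewrite eb ed a0; ring.
  + apply: (A1 hPS (g := d) (r := r' * r) (q := r')) => //.
    * by rewrite hGS eb ea mulrA.
    * by apply/eqP => d0; move/eqP: dG; apply; rewrite eb ea d0; ring.
    * by apply: (inOM hv) => //; apply: inPO.
    * exact: inPO.
- case: (dv_total hv d b) => [[r [hr ebd]]|[r2 [hr2 ed]]].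
  + apply: (A1 hPS (g := d) (r := r) (q := r * r1)) => //.
    * by rewrite hGS ea ebd mulrA.
    * by apply/eqP => d0; move/eqP: dG; apply; rewrite ea ebd d0; ring.
    * by apply: (inOM hv) => //; apply: inPO.
  + apply: (A3 hP (t := b) (r1 := r1) (r2 := r2)) => //; first by rewrite -/G hG ea ed.
    by apply/eqP => b0; move/eqP: dG; apply; rewrite ea ed b0; ring.
Qed.

End Main.

Section Exist.
Variable F : fieldType.
Variable v : F -> int.
Hypothesis hv : is_dvaluation v.
Notation O := (inO v).
Notation Pp := (inP v).
Variable B : 'M[F]_2.
Hypothesis hBs : B^T = B.
Hypothesis hBu : B \in unitmx.
Variable inv : 'M[F]_2 -> 'M[F]_2.
Hypothesis hB : forall (s : 'M[F]_2) x y, bform B x (s *m y) = bform B (inv s *m x) y.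
Variable Ord : 'M[F]_2 -> Prop.
Hypothesis hOrd : is_inv_order v inv Ord.

Definition e0 : 'cV[F]_2 := delta_mx ord0 ord0.
Definition e1 : 'cV[F]_2 := delta_mx ord_max ord0.
Definition Lset x := exists s t, [/\ Ord s, Ord t & x = s *m e0 + t *m e1].

Lemma summx_entry n (c : 'I_n -> F) (g : 'I_n -> 'M[F]_2) a b :
  (\sum_i c i *: g i) a b = \sum_i c i * g i a b.
Proof. by rewrite summxE; apply: eq_bigr => i _; rewrite mxE. Qed.

Lemma Lset_entry s t (i : 'I_2) : (s *m e0 + t *m e1) i ord0 = s i ord0 + t i ord_max.
Proof. by rewrite mxE /e0 /e1 !colE'. Qed.

Lemma lat_mk2 a b d x : lat v (mk2 a 0 b d) x <-> Tspan v a b d (x ord0 ord0) (x ord_max ord0).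
Proof.
split.
- case=> y [hy ->]; rewrite (vc2E y) mul_mk2v !mxE /=.
  exists (y ord0 ord0), (y ord_max ord0); do !split; try exact: hy; ring.
- case=> y1 [y2 [h1 [h2 [ex0 ex1]]]]; exists (vc2 y1 y2); split.
  + by move=> i j; rewrite !mxE; case: (ord2P i) => ->.
  + by rewrite (vc2E x) mul_mk2v ex0 ex1; congr vc2; ring.
Qed.

Lemma exists_setup : exists P, Setup v B Ord P.
Proof.
case: hOrd => [[[k [g [hg _]]] O1 OM] hinvO].
have Ord0 : Ord 0.
  by apply/hg; exists (fun _ => 0); split => [i|]; [exact: inO0 | rewrite big1 // => i _; rewrite scale0r].
have [a1 [b1 [d1 hs1]]] := span_fam hv (fun i => g i ord0 ord0) (fun i => g i ord_max ord0) 0 0 0.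
have [a2 [b2 [d2 hs2]]] := span_fam hv (fun i => g i ord0 ord_max) (fun i => g i ord_max ord_max) a1 b1 d1.
set P := mk2 a2 0 b2 d2.
have key : forall x, lat v P x <-> Lset x.
  move=> x; rewrite lat_mk2; split.
  - move/hs2 => [y1 [y2 [c' [h1 h2 hc' ex0 ex1]]]].
    have : Tspan v a1 b1 d1 (y1 * a1) (y1 * b1 + y2 * d1) by exists y1, y2.
    move/hs1 => [z1 [z2 [c [_ _ hc ez0 ez1]]]].
    exists (\sum_i c i *: g i), (\sum_i c' i *: g i); split.
    + by apply/hg; exists c.
    + by apply/hg; exists c'.
    + rewrite (vc2E x) (vc2E (_ + _)) !Lset_entry !summx_entry ex0 ex1 ez0 ez1.
      congr vc2; ring.
  - case=> s [t [hs ht ->]].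
    have [c [hc es]] := (hg s).1 hs.
    have [c' [hc' et]] := (hg t).1 ht.
    rewrite !Lset_entry es et !summx_entry.
    have : Tspan v a1 b1 d1 (\sum_i c i * g i ord0 ord0) (\sum_i c i * g i ord_max ord0).
      by apply/hs1; exists 0, 0, c; split => //; try exact: inO0; ring.
    case=> z1 [z2 [hz1 [hz2 [f0 f1]]]].
    apply/hs2; exists z1, z2, c'; split => //; [rewrite f0 | rewrite f1]; ring.
have Le0 : Lset e0 by exists 1, 0; split => //; rewrite mul0mx addr0 mul1mx.
have Le1 : Lset e1 by exists 0, 1; split => //; rewrite mul0mx add0r mul1mx.
have a20 : a2 != 0.
  move/key/lat_mk2: Le0 => [y1 [y2 [_ [_ [f0 _]]]]].
  move: f0; rewrite /e0 mxE /= => f0; apply/eqP => a0; move: f0; rewrite a0 mulr0.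
  by move/eqP; rewrite oner_eq0.
have d20 : d2 != 0.
  move/key/lat_mk2: Le1 => [y1 [y2 [_ [_ [f0 f1]]]]].
  move: f0 f1; rewrite /e1 !mxE /= => f0 f1.
  have y10 : y1 = 0 by move/eqP: f0; rewrite eq_sym mulf_eq0 (negbTE a20) orbF => /eqP.
  apply/eqP => d0; move: f1; rewrite y10 d0 !mul0r mulr0 addr0.
  by move/eqP; rewrite oner_eq0.
have Pu : P \in unitmx by rewrite unitmxE det_mk2 unitfE mul0r subr0 mulf_neq0.
have stab : forall s, Ord s -> EndL (lat v P) s.
  move=> s hs x /key [u [t [hu ht ->]]]; apply/key; exists (s * u), (s * t); split;
    [exact: OM | exact: OM | by rewrite mulmxDr !mulmxA].
have dstab : forall s, Ord s -> EndL (dual_lattice v B (lat v P)) s.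
  move=> s hs x hx y hy; have [t [ht ->]] := (hinvO s).1 hs.
  by rewrite -hB; apply: hx; apply: stab.
have Mu : P^T *m B \in unitmx by rewrite unitmx_mul unitmx_tr Pu hBu.
have Pdu : invmx (P^T *m B) \in unitmx by rewrite unitmx_inv.
have hd : forall x, dual_lattice v B (lat v P) x <-> lat v (invmx (P^T *m B)) x.
  move=> x; rewrite dual_lat //; split.
  - by move=> h; exists (P^T *m B *m x); split => //; rewrite mulmxA mulVmx // mul1mx.
  - by case=> y [hy ->]; rewrite mulmxA mulmxV // mul1mx.
exists P; split => // s hs.
have [X [hX eX]] := (EndL_lat hv s Pu).1 (stab s hs).
have hE : EndL (lat v (invmx (P^T *m B))) s.
  by move=> x /hd hx; apply/hd; apply: dstab.
have [Z [hZ eZ]] := (EndL_lat hv s Pdu).1 hE.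
exists X, Z; split => //.
have -> : Z *m (P^T *m B) = P^T *m B *m (invmx (P^T *m B) *m Z) *m (P^T *m B).
  by rewrite (mulmxA (P^T *m B) (invmx _) Z) mulmxV // mul1mx.
by rewrite -eZ (mulmxA (P^T *m B) s) -(mulmxA (P^T *m B *m s)) mulVmx // mulmx1.
Qed.

End Exist.

Section Final.
Variable F : fieldType.
Variable v : F -> int.
Hypothesis hv : is_dvaluation v.
Notation O := (inO v).
Variable B : 'M[F]_2.
Hypothesis hBs : B^T = B.
Variable inv : 'M[F]_2 -> 'M[F]_2.
Hypothesis hB : forall (s : 'M[F]_2) x y, bform B x (s *m y) = bform B (inv s *m x) y.
Hypothesis hinv2 : forall x, inv (inv x) = x.
Variable Q : 'M[F]_2.
Hypothesis Qu : Q \in unitmx.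
Variables (c : F) (W W' : 'M[F]_2).
Hypotheses (c0 : c != 0) (hW : intM v W) (hW' : intM v W') (WW : W *m W' = 1%:M)
  (hG : Q^T *m B *m Q = c *: W).

Notation N := (lat v Q).

Lemma QtB : Q^T *m B = (c *: W) *m invmx Q.
Proof. by rewrite -hG -mulmxA mulmxV // mulmx1. Qed.

Lemma Kid : Q *m W' *m (Q^T *m B) = c *: 1%:M.
Proof.
rewrite QtB -scalemxAl -scalemxAr !mulmxA -(mulmxA Q) (mulmx1C WW) mulmx1 mulmxV //.
Qed.

Lemma N_modular : modular v B c N.
Proof.
move=> x; split.
- case=> z [hz ->]; exists (c^-1 *: (Q *m z)); split.
  + apply/dual_lat => //.
    by rewrite -scalemxAr mulmxA hG -scalemxAl scalerA mulVf // scale1r; apply: intM_mul.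
  + by rewrite scalerA mulfV // scale1r.
- case=> y [hy ->]; have {}hy := (dual_lat hv Q y hBs).1 hy.
  exists (W' *m (Q^T *m B *m y)); split; first exact: intM_mul.
  by rewrite (mulmxA Q W') (mulmxA (Q *m W')) Kid -scalemxAl mul1mx.
Qed.


Lemma colsum (cc : 'I_2 -> F) :
  \sum_i cc i *: (Q *m delta_mx i (ord0 : 'I_1)) = Q *m vc2 (cc ord0) (cc ord_max).
Proof.
rewrite sum2g !scalemxAr -mulmxDr; congr (_ *m _).
apply/matrixP => i j; rewrite (ord1 j) !mxE; case: (ord2P i) => -> /=; rewrite ?mulr1 ?mulr0 ?addr0 ?add0r //.
Qed.

Lemma N_lattice : is_lattice v N.
Proof.
exists 2%N, (fun i => Q *m delta_mx i ord0); split.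
- move=> x; split.
  + case=> y [hy ->]; exists (fun i => y i ord0); split => [i|]; first exact: hy.
    by rewrite colsum -vc2E.
  + case=> cc [hc ->]; rewrite colsum; exists (vc2 (cc ord0) (cc ord_max)); split => //.
    by move=> i j; rewrite !mxE; case: (ord2P i) => -> /=; apply: hc.
- move=> x; exists (fun i => (invmx Q *m x) i ord0); rewrite colsum -vc2E.
  by rewrite mulmxA mulmxV // mul1mx.
Qed.

Lemma N_dual_stab s : EndL N s -> EndL (dual_lattice v B N) s.
Proof.
move=> hs y hy.
have [x [hx ex]] : exists x, N x /\ x = c *: y by exists (c *: y); split => //; apply/N_modular; exists y.
have := hs x hx; move/N_modular => [y' [hy' e]].
by move: e; rewrite ex -scalemxAr => /(scalerI c0) ->.
Qed.

Lemma N_inv_stab s : EndL N s -> EndL N (inv s).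
Proof.
move=> hs x /N_modular [y [hy ->]].
apply/N_modular; exists (inv s *m y); split; last by rewrite scalemxAr.
by move=> z hz; rewrite -hB; apply: hy; apply: hs.
Qed.


Lemma conjsum (cc : 'I_4 -> F) : \sum_k cc k *: (Q *m @E4 F k *m invmx Q) =
   Q *m mk2 (cc q0) (cc q1) (cc q2) (cc q3) *m invmx Q.
Proof.
rewrite -Esum mulmx_sumr mulmx_suml; apply: eq_bigr => k _.
by rewrite -scalemxAr -scalemxAl.
Qed.

Lemma coef4_int Y : intM v Y -> forall k, O (coef4 Y k).
Proof. by move=> hY [[|[|[|k]]] Hk]; rewrite /coef4 /=; apply: hY. Qed.

Lemma N_inv_order : is_inv_order v inv (EndL N).
Proof.
split; first split.
- exists 4%N, (fun k => Q *m @E4 F k *m invmx Q); split.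
  + move=> x; split.
    * move/(EndL_lat hv x Qu) => [Y [hY eY]].
      exists (coef4 Y); split; first exact: coef4_int.
      by rewrite conjsum coef4E -eY -mulmxA mulmxV // mulmx1.
    * case=> cc [hc ->]; rewrite conjsum; apply/(EndL_lat hv _ Qu).
      exists (mk2 (cc q0) (cc q1) (cc q2) (cc q3)); split.
      - by apply/intM_mk2; split; apply: hc.
      - by rewrite -mulmxA mulVmx // mulmx1.
  + move=> x; exists (coef4 (invmx Q *m x *m Q)); rewrite conjsum coef4E.
    by rewrite !mulmxA mulmxV // mul1mx -mulmxA mulmxV // mulmx1.
- by move=> x hx; rewrite mul1mx.
- move=> a b ha hb x hx; change ((a *m b) *m x) with ((a * b) *m x).
  by rewrite -mulmxA; apply: ha; apply: hb.
- move=> y; split.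
  + by move=> hy; exists (inv y); split; [apply: N_inv_stab | rewrite hinv2].
  + by case=> x [hx ->]; apply: N_inv_stab.
Qed.


Lemma signO n : O ((-1) ^+ n).
Proof. elim: n => [|n IH]; first by rewrite expr0; apply: inO1. by rewrite exprS; apply: (inOM hv) => //; apply: (inON hv); apply: (inO1 hv). Qed.

Lemma det_int n (A : 'M[F]_n) : intM v A -> O (\det A).
Proof.
move=> hA; rewrite /determinant; apply: (big_ind O); [exact: inO0 | by move=> ? ?; apply: (inOD hv) | ].
move=> s _; apply: (inOM hv); first exact: signO.
by apply: (big_ind O); [exact: inO1 | by move=> ? ?; apply: (inOM hv) | move=> i _; apply: hA].
Qed.

Lemma tr_int (A : 'M[F]_2) : intM v A -> O (\tr A).
Proof. by move=> hA; rewrite /mxtrace; apply: (big_ind O); [exact: inO0 | by move=> ? ?; apply: (inOD hv) | move=> i _; apply: hA]. Qed.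

Lemma tr_conj (a b Y Y' : 'M[F]_2) : a *m Q = Q *m Y -> b *m Q = Q *m Y' -> \tr (a *m b) = \tr (Y *m Y').
Proof.
move=> ea eb.
have ha : a = Q *m Y *m invmx Q by rewrite -ea -mulmxA mulmxV // mulmx1.
have hb : b = Q *m Y' *m invmx Q by rewrite -eb -mulmxA mulmxV // mulmx1.
rewrite ha hb -!mulmxA mxtrace_mulC -!mulmxA mulVmx // mulmx1 !mulmxA -(mulmxA Y) mulVmx // mulmx1.
done.
Qed.

Lemma good_conclusions (Ord : 'M[F]_2 -> Prop) : is_max_inv_order v inv Ord ->
  (forall s, Ord s -> exists Y, intM v Y /\ s *m Q = Q *m Y) ->
  (exists (alpha : F) (L : 'cV[F]_2 -> Prop),
      [/\ alpha != 0, is_lattice v L, modular v B alpha L &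
          forall s, Ord s <-> (EndL L s /\ EndL (dual_lattice v B L) s)])
  /\ is_reduced_disc v Ord (inO v).
Proof.
move=> [hOi hmax] hst.
have OrdN : forall s, Ord s <-> EndL N s.
  move=> s; split.
  - by move=> hs; apply/(EndL_lat hv s Qu); apply: hst.
  - apply: (hmax (EndL N) N_inv_order) => x hx; apply/(EndL_lat hv x Qu); exact: hst.
split.
- exists c, N; split => //.
  + exact: N_lattice.
  + exact: N_modular.
  + move=> s; split.
    * by move/OrdN => h; split => //; apply: N_dual_stab.
    * by case=> h _; apply/OrdN.
have hd : forall x, disc_order v Ord x <-> O x.
  move=> x; split.
  + case=> k [cc [ss [hc hss ->]]].
    apply: (big_ind O); [exact: inO0 | by move=> ? ?; apply: (inOD hv) | move=> i _].
    apply: (inOM hv) => //.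
    have [a [ha ->]] := hss i.
    apply: det_int => j l; rewrite mxE.
    have [Y [hY eY]] := (EndL_lat hv _ Qu).1 ((OrdN _).1 (ha j)).
    have [Y' [hY' eY']] := (EndL_lat hv _ Qu).1 ((OrdN _).1 (ha l)).
    change (a j * a l) with (a j *m a l); rewrite (tr_conj eY eY').
    by apply: tr_int; apply: intM_mul.
  + move=> hx; exists 1%N, (fun _ => - x), (fun _ => -1); split.
    * by move=> _; apply: inON.
    * move=> _; exists (fun k => Q *m @E4 F k *m invmx Q); split.
      - move=> k; apply/OrdN; apply/(EndL_lat hv _ Qu); exists (@E4 F k); split.
        + by case: (ord4P k) => ->; rewrite /E4 /=; apply/intM_mk2; split; (exact: inO0 || exact: (inO1 hv)).
        + by rewrite -mulmxA mulVmx // mulmx1.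
      - rewrite -det_trE; congr (\det _); apply/matrixP => j l; rewrite !mxE.
        change ((Q *m @E4 F j *m invmx Q) * (Q *m @E4 F l *m invmx Q)) with ((Q *m @E4 F j *m invmx Q) *m (Q *m @E4 F l *m invmx Q)).
        by symmetry; apply: tr_conj; rewrite -!mulmxA mulVmx // mulmx1.
    * by rewrite big_ord1 mulrNN mulr1.
have hm : forall x, ideal_mul v O O x <-> O x.
  move=> x; split.
  + case=> k [cc [ss [hc hss ->]]].
    apply: (big_ind O); [exact: inO0 | by move=> ? ?; apply: (inOD hv) | move=> i _].
    apply: (inOM hv) => //; have [s' [t' [hs' ht' ->]]] := hss i; exact: (inOM hv).
  + move=> hx; exists 1%N, (fun _ => x), (fun _ => 1); split => //.
    * by move=> _; exists 1, 1; split; [exact: inO1|exact: inO1|rewrite mulr1].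
    * by rewrite big_ord1 mulr1.
by move=> x; split => h; [apply/hm/hd | apply/hd/hm].
Qed.

End Final.

Section Last.
Variable F : fieldType.
Variable v : F -> int.
Hypothesis hv : is_dvaluation v.
Notation O := (inO v).

Lemma form_eq (M N : 'M[F]_2) :
  (forall x y : 'cV[F]_2, (x^T *m M *m y) ord0 ord0 = (x^T *m N *m y) ord0 ord0) -> M = N.
Proof.
move=> H; apply/matrixP => i j; have := H (delta_mx i ord0) (delta_mx j ord0).
by rewrite trmx_delta !colE' -!rowE !mxE.
Qed.

Lemma opp_mk2 a b c d : - mk2 a b c d = mk2 (- a) (- b) (- c) (- d) :> 'M[F]_2.
Proof. apply/matrixP => i j; rewrite !mxE; case: (ord2P i) => ->; case: (ord2P j) => -> //. Qed.

Lemma skew_det (B h : 'M[F]_2) : B^T = B -> B \in unitmx -> h != 0 -> (2 : F) != 0 ->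
  B *m h = - (h^T *m B) -> exists k : F, k != 0 /\ \det B * \det h = k ^+ 2.
Proof.
move=> hBs hBu h0 two0 eK.
have Ks : (B *m h)^T = - (B *m h) by rewrite trmx_mul hBs eK opprK.
move: Ks; rewrite (mk2E (B *m h)) tr_mk2 opp_mk2 => /mk2_inj [e0 e1 _ e3].
have z0 : forall k : F, k = - k -> k = 0.
  move=> k ek; have h2 : (2 : F) * k = 0.
    have -> : (2 : F) * k = k + k by ring.
    by rewrite {2}ek subrr.
  by move/eqP: h2; rewrite mulf_eq0 (negbTE two0) /= => /eqP.
exists ((B *m h) ord0 ord_max); split.
- apply/eqP => k0; move/eqP: h0; apply.
  have -> : h = invmx B *m (B *m h) by rewrite mulKmx.
  rewrite (mk2E (B *m h)) e1 k0 (z0 _ e0) (z0 _ e3) oppr0.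
  apply/matrixP => i j; rewrite !mxE sum2 !mxE; case: (ord2P j) => -> /=; rewrite !mulr0 addr0 //.
- rewrite -det_mulmx {1}(mk2E (B *m h)) det_mk2 e1 (z0 _ e0); ring.
Qed.

End Last.

Unset Implicit Arguments.
Set Strict Implicit.

Theorem theorem7p3 (F : fieldType) (v : F -> int)
  (hF : is_nonarch_local_field v) (hdy : dyadic v)
  (inv : 'M[F]_2 -> 'M[F]_2) (hinv : is_orth_involution inv)
  (B : 'M[F]_2) (hB : is_adjoint_form inv B)
  (lambda : F) (hlam_disc : in_disc inv lambda) (hlam_o : inO v lambda)
  (hlam_iota : forall x, (exists c, inO v c /\ x = lambda * c) <-> iota_disc v inv x)
  (hdef : ~ (forall x, qdefect v (- lambda) x <-> inP v x))
  (O : 'M[F]_2 -> Prop) (hO : is_max_inv_order v inv O) :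
  (exists (alpha : F) (L : 'cV[F]_2 -> Prop),
      [/\ alpha != 0, is_lattice v L, modular v B alpha L &
          forall s, O s <-> (EndL L s /\ EndL (dual_lattice v B L) s)])
  /\ is_reduced_disc v O (inO v)
  /\ (forall x, (inO v x /\ iota_disc v inv x) <-> inO v x).
Proof.
case: hF => hv _ _.
case: hB => hBs hBu hB.
case: hinv => _ _ hinv2 _.
case: hdy => two0 _.
case: (hlam_disc) => h [h0 hskew [mu [mu0 elam]]].
have eK : B *m h = - (h^T *m B).
  apply: form_eq => x y.
  have tN : forall (A : 'M[F]_(2,1)), (- A)^T = - A^T by move=> A; apply/matrixP => i j; rewrite !mxE.
  have E := hB h x y; rewrite !bformE hskew in E.
  rewrite (mulmxA x^T B h) -(mulmxA (x^T *m B) h y) E.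
  by rewrite mulNmx tN trmx_mul !(mulNmx, mulmxN) !mulmxA.
have [k [k0 ek]] := skew_det hBs hBu h0 two0 eK.
have lam0 : lambda != 0.
  rewrite elam mulf_neq0 ?expf_neq0 //; apply/eqP => dh; move: ek; rewrite dh mulr0 => /esym/eqP.
  by rewrite expf_eq0 (negbTE k0) andbF.
have detB : \det B = (k * mu) ^+ 2 / lambda.
  have dh : \det h != 0 by apply/eqP => dh; move/eqP: lam0; apply; rewrite elam dh mul0r.
  rewrite elam exprMn -ek; fld.
have vl0 : 0 <= v lambda := inO_v lam0 hlam_o.
have vl1 : v lambda <= 1.
  have [_ _ [pi [pi0 vpi]]] := hv.
  rewrite leNgt; apply/negP => hgt.
  have pp0 : pi * pi != 0 by rewrite mulf_neq0.
  have ppi0 : (pi * pi)^-1 != 0 by rewrite invr_eq0.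
  have iy : iota_disc v inv (lambda / (pi * pi)).
    exists 1%N, (fun _ => 1), (fun _ => lambda / (pi * pi)); split.
    - by move=> _; apply: (inO1 hv).
    - move=> _; split.
      + exists h; split => //; exists (mu / pi); split; first by rewrite mulf_neq0 ?invr_eq0.
        by rewrite elam; fld.
      + right; rewrite (vM hv) // (vV hv) // (vM hv) // vpi; vlia v.
    - by rewrite big_ord1 mul1r.
  have [c [hc ec]] := (hlam_iota _).2 iy.
  have ec' : c = (pi * pi)^-1 by apply: (mulfI lam0); rewrite -ec.
  have c0 : c != 0 by rewrite ec'.
  have := inO_v c0 hc; rewrite ec' (vV hv) // (vM hv) // vpi; lia.
have vne1 : v lambda != 1.
  apply/eqP => vl; apply: hdef => x; split.
  - move=> hq; have [c [hc ex]] := hq 0.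
    rewrite expr2 mul0r subr0 in ex.
    have [c0|c0] := eqVneq c 0; first by left; rewrite ex c0 mulr0.
    have [x0|x0] := eqVneq x 0; first by left.
    right; rewrite ex (vM hv) ?oppr_eq0 // (vN hv) vl; have := inO_v c0 hc; vlia v.
  - move=> hx xi.
    have [a0 va] : - lambda - xi ^+ 2 != 0 /\ v (- lambda - xi ^+ 2) <= 1.
      have [->|xi0] := eqVneq xi 0.
        by rewrite expr2 mul0r subr0 (vN hv) vl oppr_eq0.
      have s0 : xi ^+ 2 != 0 by rewrite expf_neq0.
      have vs : v (xi ^+ 2) = v xi + v xi by rewrite expr2 (vM hv).
      have a0 : - lambda - xi ^+ 2 != 0.
        apply/eqP => e; have : v (- lambda) = v (xi ^+ 2) by rewrite -(subrK (xi ^+ 2) (- lambda)) e add0r.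
        rewrite (vN hv) vl vs; vlia v.
      split => //; rewrite leNgt; apply/negP => hva.
      have nl0 : - lambda != 0 by rewrite oppr_eq0.
      have := vD hv a0 s0; rewrite subrK => /(_ nl0); rewrite (vN hv) vl vs.
      case => [|h1]; first by vlia v.
      have na0 : - (- lambda - xi ^+ 2) != 0 by rewrite oppr_eq0.
      have e2 : - lambda + - (- lambda - xi ^+ 2) = xi ^+ 2 by ring.
      have := vD hv nl0 na0; rewrite e2 => /(_ s0).
      rewrite (vN hv) (vN hv) vl vs; vlia v.
    exists (x / (- lambda - xi ^+ 2)); split; last by rewrite mulrC divfK.
    have [->|x0] := eqVneq x 0; first by left; rewrite mul0r.
    right; rewrite (vM hv) ?invr_eq0 // (vV hv) //; have := inP_v x0 hx; vlia v.
have vl : v lambda = 0 by move: vl0 vl1 vne1; vlia v.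
have lamIO : inO v lambda^-1 := unit_inv hv lam0 vl.
have [P hP] := exists_setup hv hBs hBu hB hO.1.
have rho0 : k * mu != 0 by rewrite mulf_neq0.
have [Q [Qu [c [W [W' [c0 hW hW' WW hG]]]] hst]] := setup_good hv hBs hBu lam0 hlam_o lamIO rho0 detB hP.
have [G1 G2] := good_conclusions hv hBs hB hinv2 Qu c0 hW hW' WW hG hO hst.
split => //; split => // x; split; first by case.
move=> hx; split => //; apply/hlam_iota; exists (x / lambda); split.
- exact: (inOM hv).
- by rewrite mulrC divfK.
Qed.
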